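(* Let $ABC$ be a triangle and let $(P, P')$ and $(Q, Q')$ be two pairs of isogonal conjugates with respect to $ABC$. Then the center of the spiral similarity taking segment $PQ$ to segment $Q'P'$ (i.e. sending $P \mapsto Q'$ and $Q \mapsto P'$) lies on the circumcircle $(ABC)$.
   Context: A spiral similarity is a composition of a rotation and a homothety with a common center; its center is the ''spiral center''. *)

(* Defs.v *)
(* the Euclidean plane is modelled as the complex numbers R[i]
   over an arbitrary real closed field R (e.g. the reals). *)
From HB Require Import structures.
From mathcomp Require Import all_boot all_order all_algebra.
From mathcomp Require Import complex.
Set Implicit Arguments. Unset Strict Implicit. Unset Printing Implicit Defensive.
Import Order.TTheory GRing.Theory Num.Theory.
Local Open Scope ring_scope.
Local Open Scope complex_scope.

Definition collinear (R : rcfType) (X Y Z : R[i]) : Prop :=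
  ((Y - X) * (Z - X)^*) \is Num.real.

(* Isogonality of lines VX and VY w.r.t. the angle (V; U, W): the directed angle
   from VU to VX equals the directed angle from VY to VW (mod pi), i.e.
   arg(X-V) - arg(U-V) = arg(W-V) - arg(Y-V) mod pi, i.e.
   (X - V) * (Y - V) / ((U - V) * (W - V)) is real. *)
Definition isogonal_at (R : rcfType) (V U W X Y : R[i]) : Prop :=
  ((X - V) * (Y - V) / ((U - V) * (W - V))) \is Num.real.

Definition isogonal_conjugates (R : rcfType) (A B C P P' : R[i]) : Prop :=
  [/\ [/\ ~ collinear A B P, ~ collinear B C P & ~ collinear C A P],
      [/\ ~ collinear A B P', ~ collinear B C P' & ~ collinear C A P'] &
      [/\ isogonal_at A B C P P', isogonal_at B C A P P' & isogonal_at C A B P P']].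

Definition on_circumcircle (R : rcfType) (A B C X : R[i]) : Prop :=
  exists c : R[i], [/\ `|A - c| = `|B - c|, `|A - c| = `|C - c| & `|A - c| = `|X - c|].

Definition spiral (R : rcfType) (O a : R[i]) (z : R[i]) : R[i] := O + a * (z - O).

(* Main.v *)
Require Import Defs.
From HB Require Import structures.
From mathcomp Require Import all_boot all_order all_algebra.
From mathcomp Require Import complex.
From mathcomp Require Import ring lra.
Import Order.TTheory GRing.Theory Num.Theory.
Local Open Scope ring_scope.
Local Open Scope complex_scope.

Lemma conj_real (R : rcfType) (x : R[i]) : x \is Num.real -> x^* = x.
Proof. by case/complex_realP => k ->; rewrite conjc_real. Qed.

Lemma normsq_real (R : rcfType) (x : R[i]) : x * x^* \is Num.real.
Proof. exact/ger0_real/mulcJ_ge0. Qed.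

Lemma step (R : rcfType) (A B C O l : R[i]) :
  A != B -> C != A -> C != B -> l != 0 ->
  (O-A)* l /((B-A)*(C-A)) \is Num.real -> (O-B)* l /((C-B)*(A-B)) \is Num.real ->
  ((O-A)*(C-B)*((O-B)*(C-A))^*) \is Num.real.
Proof.
move=> hAB hCA hCB hl hA hB.
set xA := (O-A)* l /((B-A)*(C-A)) in hA *.
set xB := (O-B)* l /((C-B)*(A-B)) in hB *.
have e : (O-A)*(C-B)*((O-B)*(C-A))^* = xA * xB^* *
   (- (((B-A)*(B-A)^*) * ((C-A)*(C-A)^*) * ((C-B)*(C-B)^*)) / (l * l^*)).
  rewrite /xA /xB !(rmorphM, rmorphB, fmorphV).
  have hBA : B - A != 0 by rewrite subr_eq0 eq_sym.
  have hCA' : C - A != 0 by rewrite subr_eq0.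
  have hCB' : C - B != 0 by rewrite subr_eq0.
  have hAB' : A - B != 0 by rewrite subr_eq0.
  have cBA : (B^* - A^*) != 0 by rewrite -rmorphB conjc_eq0.
  have cCA : (C^* - A^*) != 0 by rewrite -rmorphB conjc_eq0.
  have cCB : (C^* - B^*) != 0 by rewrite -rmorphB conjc_eq0.
  have cAB : (A^* - B^*) != 0 by rewrite -rmorphB conjc_eq0.
  have cl : l^* != 0 by rewrite conjc_eq0.
  field; repeat (apply/andP; split); first [exact: hl | exact: cl | exact: cAB | exact: cCB | exact: cCA | exact: cBA | exact: hCA' | exact: hBA | exact: hCB' | exact: hAB'].
rewrite e.
have cr : forall x : R[i], x \is Num.real -> x^* \is Num.real.
  by move=> x /complex_realP [k ->]; rewrite conjc_real; apply/complex_realP; exists k.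
apply: rpredM; first by apply: rpredM => //; exact: cr.
apply: rpredM; last by rewrite realV; exact: normsq_real.
by rewrite realN; apply: realM; [apply: realM|]; exact: normsq_real.
Qed.
Lemma final (R : rcfType) (A B C O : R[i]) : ~ collinear A B C ->
  ((O-A)*(C-B)*((O-B)*(C-A))^*) \is Num.real -> on_circumcircle A B C O.
Proof.
case: A => ax ay; case: B => bx by'; case: C => cx cy; case: O => ox oy.
rewrite /collinear /on_circumcircle.
simpc. rewrite !complex_real.
move=> Hc /eqP HY.
set D := 2 * (ax*(by'-cy)+bx*(cy-ay)+cx*(ay-by')).
have HD : D != 0.
  apply/negP => /eqP HD0; apply: Hc; apply/eqP.
  rewrite /D in HD0. 
  have h2 : (2:R) != 0 by rewrite pnatr_eq0.
  have := HD0; move/eqP; rewrite mulf_eq0 (negbTE h2) /= => /eqP E.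
  rewrite -oppr0 -E; ring.
set ux := ((ax^+2+ay^+2)*(by'-cy)+(bx^+2+by'^+2)*(cy-ay)+(cx^+2+cy^+2)*(ay-by'))/D.
set uy := ((ax^+2+ay^+2)*(cx-bx)+(bx^+2+by'^+2)*(ax-cx)+(cx^+2+cy^+2)*(bx-ax))/D.
exists (ux +i* uy).
rewrite !normc_def /=.
rewrite /ux /uy; clear ux uy.
move: HD; rewrite /D mulf_eq0 negb_or => /andP[H2 HD]; clear D.
split; congr (_ %:C); congr Num.sqrt.
- by field; rewrite ?HD ?H2 /=.
- by field; rewrite ?HD ?H2 /=.
- set Y := (X in X = 0) in HY.
  set L := (X in X = _).
  set Rr := (X in _ = X).
  have key : (L - Rr) * (2 * (ax * (by' - cy) + bx * (cy - ay) + cx * (ay - by'))) = - (2 * Y).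
    rewrite /L /Rr /Y; by field; rewrite ?HD ?H2.

  move: key; rewrite HY mulr0 oppr0 => /eqP.
  by rewrite !mulf_eq0 (negbTE H2) (negbTE HD) !orbF subr_eq0 => /eqP.
Qed.

Theorem lemma2p3 (R : rcfType) (A B C P P' Q Q' O a : R[i]) :
  ~ collinear A B C ->
  isogonal_conjugates A B C P P' ->
  isogonal_conjugates A B C Q Q' ->
  P != Q ->
  a != 0 -> a != 1 ->
  spiral O a P = Q' -> spiral O a Q = P' ->
  on_circumcircle A B C O.
Proof.
move=> nABC [_ _ [iPA iPB _]] [_ _ [iQA iQB _]] PQ a0 a1 HQ' HP'.
have hAB : A != B.
  by apply/negP => /eqP E; apply: nABC; rewrite /collinear E subrr mul0r real0.
have hCA : C != A.
  by apply/negP => /eqP E; apply: nABC; rewrite /collinear E subrr rmorph0 mulr0 real0.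
have hCB : C != B.
  apply/negP => /eqP E; apply: nABC; rewrite /collinear E; exact: normsq_real.
apply: (@final _ A B C O nABC).
rewrite /spiral in HQ' HP'; subst Q' P'.
set l := P + (O + a * (Q - O)) - Q - (O + a * (P - O)).
have hl : l != 0.
  have -> : l = (P - Q) * (1 - a) by rewrite /l; ring.
  by rewrite mulf_neq0 // subr_eq0 // eq_sym.
apply: (@step _ A B C O l hAB hCA hCB hl).
- have -> : (O - A) * l / ((B - A) * (C - A)) =
     (P - A) * (O + a * (Q - O) - A) / ((B - A) * (C - A)) -
     (Q - A) * (O + a * (P - O) - A) / ((B - A) * (C - A)) by rewrite /l; ring.
  exact: rpredB.
- have -> : (O - B) * l / ((C - B) * (A - B)) =
     (P - B) * (O + a * (Q - O) - B) / ((C - B) * (A - B)) -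
     (Q - B) * (O + a * (P - O) - B) / ((C - B) * (A - B)) by rewrite /l; ring.
  exact: rpredB.
Qed.
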